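(* There is a dense $G_\delta$ set $G\subseteq\ell^2$ and a continuous function $f:G\to\{1,2\}^\omega$ such that: (i) $y\notin\mathsf{HC}(f(y))$ for each $y\in G$; (ii) $\mathsf{HC}(f(y))\neq\emptyset$ for each $y\in G$; and (iii) for each nonempty open $U\subseteq\ell^2$, the image $f[U\cap G]$ contains at least two elements.
   Context: $\omega=\{0,1,2,\dots\}$; $\ell^2$ is the Hilbert space of square-summable real sequences indexed by $\omega$ with its norm topology; $\{1,2\}^\omega$ has the product topology. For $w\in\{1,2\}^\omega$, $B_w:\ell^2\to\ell^2$ is $B_w(x)(i)=w(i)\,x(i+1)$, and $\mathsf{HC}(w)$ is the set of $x\in\ell^2$ such that $\{B_w^k(x):k\in\omega\}$ is dense in $\ell^2$. *)

(* Defs.v *)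
From Stdlib Require Import Reals.
From Coquelicot Require Import Coquelicot.
Open Scope R_scope.

Definition is_l2 (x : nat -> R) : Prop := ex_series (fun i => (x i) ^ 2).

(* The l^2 norm distance (meaningful for x y in l^2). *)
Definition l2_dist (x y : nat -> R) : R :=
  sqrt (Series (fun i => (x i - y i) ^ 2)).

Definition l2_open (U : (nat -> R) -> Prop) : Prop :=
  forall x, U x -> is_l2 x /\
    exists eps, 0 < eps /\ forall y, is_l2 y -> l2_dist x y < eps -> U y.

Definition l2_dense (D : (nat -> R) -> Prop) : Prop :=
  (forall x, D x -> is_l2 x) /\
  forall x, is_l2 x -> forall eps, 0 < eps -> exists y, D y /\ l2_dist x y < eps.

Definition l2_Gdelta (G : (nat -> R) -> Prop) : Prop :=
  exists Un : nat -> (nat -> R) -> Prop,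
    (forall n, l2_open (Un n)) /\ forall x, G x <-> forall n, Un n x.

(* Points of {1,2}^omega, as real-valued sequences with values in {1,2}. *)
Definition weight12 (w : nat -> R) : Prop := forall i, w i = 1 \/ w i = 2.

Definition Bw (w : nat -> R) (x : nat -> R) : nat -> R :=
  fun i => w i * x (S i).

Definition HC (w : nat -> R) (x : nat -> R) : Prop :=
  is_l2 x /\
  forall z, is_l2 z -> forall eps, 0 < eps ->
    exists k : nat, l2_dist (Nat.iter k (Bw w) x) z < eps.

(* Continuity of f : G -> {1,2}^omega, with {1,2}^omega carrying the product
   of discrete topologies (basic opens = cylinders fixing finitely many
   initial coordinates) and G the subspace topology from l^2. *)
Definition cont_G_to_Cantor (G : (nat -> R) -> Prop) (f : (nat -> R) -> nat -> R) : Prop :=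
  forall y, G y -> forall n : nat, exists eps, 0 < eps /\
    forall z, G z -> l2_dist y z < eps -> forall i, (i < n)%nat -> f z i = f y i.

(* Main.v *)
Require Import Defs.
From Stdlib Require Import Reals Lra Lia Psatz Classical ClassicalEpsilon Cantor ZArith.
From Coquelicot Require Import Coquelicot.
Open Scope R_scope.

Fixpoint ps (h : nat -> R) (M : nat) : R :=
  match M with O => 0 | S M => ps h M + h M end.

Lemma ps_ext h h' M : (forall i, (i < M)%nat -> h i = h' i) -> ps h M = ps h' M.
Proof. induction M; simpl; intros H; auto. rewrite IHM by (intros; apply H; lia). rewrite H by lia; auto. Qed.

Lemma ps_nonneg h M : (forall i, 0 <= h i) -> 0 <= ps h M.
Proof. intros H; induction M; simpl; [lra| specialize (H M); lra]. Qed.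

Lemma ps_le h h' M : (forall i, (i < M)%nat -> h i <= h' i) -> ps h M <= ps h' M.
Proof. induction M; simpl; intros H; [lra|]. assert (ps h M <= ps h' M) by (apply IHM; intros; apply H; lia).
 specialize (H M ltac:(lia)); lra. Qed.

Lemma ps_mono h M M' : (forall i, 0 <= h i) -> (M <= M')%nat -> ps h M <= ps h M'.
Proof. intros H L; induction L; simpl; [lra|]. specialize (H m); lra. Qed.

Lemma ps_scal c h M : ps (fun i => c * h i) M = c * ps h M.
Proof. induction M; simpl; [ring|]. rewrite IHM; ring. Qed.

Lemma ps_plus h h' M : ps (fun i => h i + h' i) M = ps h M + ps h' M.
Proof. induction M; simpl; [ring|]. rewrite IHM; ring. Qed.

Lemma ps_split h a d : ps h (a + d) = ps h a + ps (fun i => h (a + i)%nat) d.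
Proof. induction d; simpl. rewrite Nat.add_0_r; ring. rewrite Nat.add_succ_r; simpl. rewrite IHd; ring. Qed.

Lemma ps_zero h M : (forall i, (i < M)%nat -> h i = 0) -> ps h M = 0.
Proof. intros H. rewrite (ps_ext h (fun _ => 0)) by auto. clear H; induction M; simpl; auto; rewrite IHM; ring. Qed.

Lemma ps_single h M k : (k < M)%nat -> (forall j, (j < M)%nat -> j <> k -> h j = 0) -> ps h M = h k.
Proof. induction M; intros Hk H; [lia|]. simpl. destruct (Nat.eq_dec k M).
 - subst. rewrite ps_zero; [ring|]. intros; apply H; lia.
 - rewrite IHM by (try lia; intros; apply H; lia). rewrite (H M) by lia; ring. Qed.

Lemma ps_geom q J : 0 <= q < 1 -> ps (fun j => q ^ j) J <= / (1 - q).
Proof. intros Hq. assert (ps (fun j => q ^ j) J = (1 - q ^ J) / (1 - q)).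
 { induction J; simpl. field; lra. rewrite IHJ. field; lra. }
 rewrite H. assert (0 <= q ^ J) by (apply pow_le; lra).
 unfold Rdiv. rewrite <- (Rmult_1_l (/ (1-q))) at 2. apply Rmult_le_compat_r.
 left; apply Rinv_0_lt_compat; lra. lra. Qed.

Lemma sum_f_ps h n : sum_f_R0 h n = ps h (S n).
Proof. induction n; simpl; [ring|]. rewrite IHn; simpl; ring. Qed.

Lemma sum_n_ps h n : sum_n h n = ps h (S n).
Proof. rewrite sum_n_Reals. apply sum_f_ps. Qed.

Lemma series_bounded h B : (forall i, 0 <= h i) -> (forall M, ps h M <= B) ->
  ex_series h /\ Series h <= B.
Proof. intros H0 HB.
 assert (E : ex_finite_lim_seq (sum_n h)).
 { apply ex_finite_lim_seq_incr with B. intros n; rewrite !sum_n_ps; simpl. specialize (H0 (S n)); simpl in *; lra.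
   intros n; rewrite sum_n_ps; auto. }
 destruct E as [l Hl].
 assert (Hs : is_series h l) by exact Hl.
 split. exists l; auto.
 rewrite (is_series_unique h l Hs).
 assert (Rbar_le l B). { apply is_lim_seq_le with (sum_n h) (fun _ => B); auto.
   intros n; rewrite sum_n_ps; auto. apply is_lim_seq_const. }
 simpl in H; auto. Qed.

Lemma series_finite h N : (forall i, (N <= i)%nat -> h i = 0) -> is_series h (ps h N).
Proof. intros H. apply is_series_Reals. intros eps Heps. exists N. intros n Hn.
 rewrite sum_f_ps. unfold R_dist. replace (S n) with (N + (S n - N))%nat by lia.
 rewrite ps_split, (ps_zero _ (S n - N)). rewrite Rplus_0_r, Rminus_diag, Rabs_R0; auto.
 intros; apply H; lia. Qed.

Lemma series_finite_ex h N : (forall i, (N <= i)%nat -> h i = 0) -> ex_series h /\ Series h = ps h N.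
Proof. intros H; split. exists (ps h N); apply series_finite; auto. apply is_series_unique, series_finite; auto. Qed.

Lemma Series_0 : Series (fun _ => 0) = 0.
Proof. apply is_series_unique. apply (series_finite (fun _ => 0) 0). auto. Qed.

Lemma series_nonneg h : (forall i, 0 <= h i) -> 0 <= Series h.
Proof. intros H. destruct (classic (ex_series h)).
 - assert (Series (fun _ => 0) <= Series h) by (apply Series_le; [intros n; specialize (H n); lra | auto]). rewrite Series_0 in H1; auto.
 - unfold Series. destruct (Lim_seq (sum_n h)) eqn:E; simpl; try lra.
   exfalso. apply H0. exists r. unfold is_series. 
   assert (ex_lim_seq (sum_n h)). { apply ex_lim_seq_incr. intros n; rewrite !sum_n_ps; simpl. specialize (H (S n)); simpl in *; lra. }
   apply Lim_seq_correct in H1. rewrite E in H1. exact H1. Qed.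

Lemma ps_le_series h M : (forall i, 0 <= h i) -> ex_series h -> ps h M <= Series h.
Proof. intros H0 He. destruct M.
 - simpl. apply series_nonneg; auto.
 - rewrite (Series_incr_n h (S M)) by (auto; lia). simpl pred. rewrite sum_f_ps.
   assert (0 <= Series (fun k => h (S M + k)%nat)) by (apply series_nonneg; auto).
   lra. Qed.

Lemma tail_series h : ex_series h -> Series h = ps h 0 + Series h.
Proof. simpl; intros; ring. Qed.

Lemma series_split h N : ex_series h -> Series h = ps h N + Series (fun k => h (N + k)%nat).
Proof. intros He. destruct N. simpl. rewrite Rplus_0_l. apply Series_ext; auto.
 rewrite (Series_incr_n h (S N)) by (auto; lia). simpl pred. rewrite sum_f_ps. auto. Qed.

Lemma tail_small h : ex_series h -> forall eps, 0 < eps -> exists N, Series (fun k => h (N + k)%nat) < eps.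
Proof. intros He eps Heps. pose proof (Series_correct _ He) as Hc. apply is_series_Reals in Hc.
 destruct (Hc eps Heps) as [N HN]. exists (S N). specialize (HN N ltac:(lia)).
 rewrite sum_f_ps in HN. unfold R_dist in HN. rewrite (series_split h (S N)) in HN by auto.
 apply Rabs_def2 in HN. lra. Qed.

Lemma Series_abs_le u v : ex_series u -> ex_series v -> (forall n, Rabs (u n) <= v n) -> Rabs (Series u) <= Series v.
Proof. intros Hu Hv H.
 assert (A: 0 <= Series (fun n => v n - u n)). { apply series_nonneg. intros n; specialize (H n); apply Rabs_le_between in H; lra. }
 assert (B: 0 <= Series (fun n => v n + u n)). { apply series_nonneg. intros n; specialize (H n); apply Rabs_le_between in H; lra. }
 rewrite Series_minus in A by auto. rewrite Series_plus in B by auto.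
 apply Rabs_le; lra. Qed.


Lemma ex_series_le_R u v : (forall n, 0 <= u n <= v n) -> ex_series v -> ex_series u.
Proof. intros H Hv. apply (series_bounded u (Series v)). intros; apply H.
 intros M. apply Rle_trans with (ps v M). apply ps_le; intros; apply H.
 apply ps_le_series; auto. intros n; specialize (H n); lra. Qed.

Lemma ex_series_lin u v c d : ex_series u -> ex_series v -> ex_series (fun n => c * u n + d * v n).
Proof. intros Hu Hv.
 pose proof (ex_series_scal c u Hu). pose proof (ex_series_scal d v Hv).
 pose proof (ex_series_plus _ _ H H0). exact H1. Qed.

Lemma ex_series_scalR c u : ex_series u -> ex_series (fun n => c * u n).
Proof. intros Hu. pose proof (ex_series_scal c u Hu). exact H. Qed.

Lemma ex_series_minusR u v : ex_series u -> ex_series v -> ex_series (fun n => u n - v n).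
Proof. intros Hu Hv. pose proof (ex_series_lin u v 1 (-1) Hu Hv). eapply ex_series_ext; [|exact H]. intros; simpl; ring. Qed.

Lemma sq_le2 p q : (p + q) ^ 2 <= 2 * p ^ 2 + 2 * q ^ 2.
Proof. pose proof (pow2_ge_0 (p - q)). nra. Qed.

Lemma l2_diff a b : is_l2 a -> is_l2 b -> ex_series (fun i => (a i - b i) ^ 2).
Proof. intros Ha Hb. apply ex_series_le_R with (fun i => 2 * (a i)^2 + 2 * (b i)^2).
 intros n; split. apply pow2_ge_0. replace (a n - b n) with (a n + - b n) by ring.
 eapply Rle_trans. apply sq_le2. right; ring.
 apply ex_series_lin; auto. Qed.

Lemma tri2 (a b c : nat -> R) : ex_series (fun i => (a i - b i)^2) -> ex_series (fun i => (b i - c i)^2) ->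
  ex_series (fun i => (a i - c i)^2) /\
  Series (fun i => (a i - c i)^2) <= 2 * Series (fun i => (a i - b i)^2) + 2 * Series (fun i => (b i - c i)^2).
Proof. intros H1 H2.
 assert (L: forall n, 0 <= (a n - c n)^2 <= 2 * (a n - b n)^2 + 2 * (b n - c n)^2).
 { intros n; split. apply pow2_ge_0. replace (a n - c n) with ((a n - b n) + (b n - c n)) by ring. apply sq_le2. }
 assert (E: ex_series (fun n => 2 * (a n - b n)^2 + 2 * (b n - c n)^2)) by (apply ex_series_lin; auto).
 split. apply ex_series_le_R with (1 := L); auto.
 eapply Rle_trans. apply Series_le; [exact L| exact E].
 rewrite Series_plus, !Series_scal_l. lra.
 apply ex_series_scalR; auto. apply ex_series_scalR; auto. Qed.

Lemma sqrt_lt_of S e : 0 <= S -> 0 < e -> S < e ^ 2 -> sqrt S < e.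
Proof. intros H0 He H. rewrite <- (sqrt_pow2 e) by lra. apply sqrt_lt_1; auto. apply pow2_ge_0. Qed.

Lemma lt_of_sqrt_lt S e : 0 <= S -> sqrt S < e -> S < e ^ 2.
Proof. intros H0 H. pose proof (sqrt_sqrt S H0). pose proof (sqrt_pos S). nra. Qed.

Lemma l2_shift x m : is_l2 x -> ex_series (fun i => (x (m + i)%nat)^2).
Proof. intros H. apply (ex_series_incr_n (fun i => (x i)^2) m). exact H. Qed.

Lemma Bw_l2 w x : weight12 w -> is_l2 x -> is_l2 (Bw w x).
Proof. intros Hw Hx. unfold is_l2, Bw. apply ex_series_le_R with (fun i => 4 * (x (S i))^2).
 intros n; split. apply pow2_ge_0. destruct (Hw n) as [E|E]; rewrite E; nra.
 apply ex_series_scalR. apply (ex_series_incr_1 (fun i => x i ^ 2)). exact Hx. Qed.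

Lemma iter_l2 w x k : weight12 w -> is_l2 x -> is_l2 (Nat.iter k (Bw w) x).
Proof. intros Hw Hx; induction k; simpl; auto. apply Bw_l2; auto. Qed.

Lemma coord_le_dist v z i : ex_series (fun j => (v j - z j)^2) -> Rabs (v i - z i) <= l2_dist v z.
Proof. intros H. unfold l2_dist. rewrite <- sqrt_Rsqr_abs. apply sqrt_le_1_alt.
 unfold Rsqr. eapply Rle_trans; [| apply ps_le_series with (M := S i)]; auto.
 replace (S i) with (i + 1)%nat by lia; rewrite (ps_split _ i 1). cbn [ps]. rewrite Nat.add_0_r.
 pose proof (ps_nonneg (fun j => (v j - z j)^2) i (fun j => pow2_ge_0 _)).
 replace ((v i - z i)^2) with ((v i - z i)*(v i - z i)) by ring. lra. intros; apply pow2_ge_0. Qed.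

Lemma dist_nonneg_series a b : is_l2 a -> is_l2 b -> 0 <= Series (fun i => (a i - b i)^2).
Proof. intros; apply series_nonneg; intros; apply pow2_ge_0. Qed.

Definition T (m : nat) (y : nat -> R) : R := Series (fun i => (y (m + i)%nat)^2).

Lemma T_nonneg m y : 0 <= T m y.
Proof. apply series_nonneg; intros; apply pow2_ge_0. Qed.

Lemma T_S m y : is_l2 y -> T m y = (y m)^2 + T (S m) y.
Proof. intros H. unfold T. rewrite Series_incr_1 by (apply l2_shift; auto).
 rewrite Nat.add_0_r. f_equal. apply Series_ext; intros; f_equal; f_equal; lia. Qed.

Lemma T_le_S m y : is_l2 y -> T (S m) y <= T m y.
Proof. intros H; rewrite (T_S m y H). pose proof (pow2_ge_0 (y m)); lra. Qed.

Lemma T_mono m m' y : is_l2 y -> (m <= m')%nat -> T m' y <= T m y.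
Proof. intros H L; induction L; [lra|]. pose proof (T_le_S m0 y H); lra. Qed.

Lemma coord_le_T m y : is_l2 y -> (y m)^2 <= T m y.
Proof. intros H; rewrite (T_S m y H). pose proof (T_nonneg (S m) y); lra. Qed.

Lemma T_small y : is_l2 y -> forall eps, 0 < eps -> exists N, forall m, (N <= m)%nat -> T m y < eps.
Proof. intros H eps He. destruct (tail_small _ H eps He) as [N HN]. exists N. intros m Hm.
 pose proof (T_mono N m y H Hm). unfold T at 2 in H0. lra. Qed.

Lemma T_cont y : is_l2 y -> forall d, 0 < d -> exists e, 0 < e /\ forall z, is_l2 z ->
  Series (fun i => (y i - z i)^2) < e -> forall m, Rabs (T m z - T m y) < d.
Proof. intros Hy d Hd. set (M := T 0 y). assert (HM: 0 <= M) by apply T_nonneg.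
 set (lam := d / (2 * (M + 1))). assert (Hl: 0 < lam) by (unfold lam; apply Rdiv_lt_0_compat; lra).
 exists (d / (2 * (1 + / lam))). split. apply Rdiv_lt_0_compat; auto. pose proof (Rinv_0_lt_compat _ Hl); lra.
 intros z Hz HD m. set (D := Series (fun i => (y i - z i)^2)) in *.
 assert (HDt: Series (fun i => (y (m+i)%nat - z (m+i)%nat)^2) <= D).
 { unfold D. rewrite (series_split (fun i => (y i - z i)^2) m) by (apply l2_diff; auto).
   pose proof (ps_nonneg (fun i => (y i - z i)^2) m (fun _ => pow2_ge_0 _)). lra. }
 assert (HTy: T m y <= M) by (apply T_mono; auto; lia).
 unfold T. rewrite <- Series_minus by (apply l2_shift; auto).
 eapply Rle_lt_trans. apply Series_abs_le with (v := fun i => lam * (y (m+i)%nat)^2 + (1 + /lam) * (y (m+i)%nat - z (m+i)%nat)^2).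
 apply ex_series_minusR; apply l2_shift; auto.
 apply ex_series_lin. apply l2_shift; auto. apply (ex_series_incr_n (fun i => (y i - z i)^2)). apply l2_diff; auto.
 intros n. set (a := y (m + n)%nat). set (b := z (m+n)%nat).
 replace (b^2 - a^2) with ((b - a) * (2 * a + (b - a))) by ring.
 rewrite Rabs_mult. pose proof (Rinv_0_lt_compat _ Hl) as Hil.
 assert (Ht: Rabs (2*a + (b-a)) <= 2 * Rabs a + Rabs (b-a)).
 { eapply Rle_trans; [apply Rabs_triang|]. rewrite Rabs_mult, (Rabs_pos_eq 2) by lra; lra. }
 assert (Hu: 0 <= Rabs (b-a)) by apply Rabs_pos.
 assert (K: Rabs (b - a) * Rabs (2 * a + (b - a)) <= 2 * Rabs (b - a) * Rabs a + (b-a)^2).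
 { eapply Rle_trans; [apply Rmult_le_compat_l; [exact Hu | exact Ht]|].
   rewrite <- (pow2_abs (b - a)). right; ring. }
 assert (K2: 2 * Rabs (b - a) * Rabs a <= lam * a^2 + /lam * (b - a)^2).
 { rewrite <- (pow2_abs a), <- (pow2_abs (b-a)).
   set (u := Rabs (b-a)). set (v := Rabs a).
   assert (Eq: lam * (lam * v^2 + /lam * u^2 - 2*u*v) = (lam*v - u)^2) by (field; lra).
   pose proof (pow2_ge_0 (lam*v - u)).
   assert (0 <= lam * v ^ 2 + / lam * u ^ 2 - 2 * u * v).
   { apply Rmult_le_reg_l with lam; auto. rewrite Rmult_0_r. lra. }
   lra. }
 replace ((a - b)^2) with ((b-a)^2) by ring. lra.
 rewrite Series_plus, !Series_scal_l. 2,3: apply ex_series_scalR.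
 2: apply l2_shift; auto. 2: apply (ex_series_incr_n (fun i => (y i - z i)^2)); apply l2_diff; auto.
 fold (T m y). assert (lam * T m y <= d / 2).
 { unfold lam. apply Rle_trans with (d / (2 * (M + 1)) * (M + 1)). apply Rmult_le_compat_l; [left; exact Hl | lra]. right; field; lra. }
 assert ((1 + / lam) * Series (fun i => (y (m + i)%nat - z (m + i)%nat) ^ 2) < d / 2).
 { apply Rle_lt_trans with ((1 + /lam) * D). apply Rmult_le_compat_l; auto. pose proof (Rinv_0_lt_compat _ Hl); lra.
   pose proof (Rinv_0_lt_compat _ Hl). apply Rlt_le_trans with ((1 + /lam) * (d / (2 * (1 + / lam)))).
   apply Rmult_lt_compat_l; lra. right; field; lra. }
 lra. Qed.


Definition thr (p : nat) : R := / 4 ^ p.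

Lemma pow_pos' x n : 0 < x -> 0 < x ^ n.
Proof. intros; apply pow_lt; auto. Qed.

Lemma thr_pos p : 0 < thr p.
Proof. unfold thr. apply Rinv_0_lt_compat, pow_lt; lra. Qed.

Lemma thr_S p : thr (S p) = thr p / 4.
Proof. unfold thr; simpl. field. apply pow_nonzero; lra. Qed.

Lemma thr_anti p q : (p <= q)%nat -> thr q <= thr p.
Proof. intros L; induction L; [lra|]. rewrite thr_S. pose proof (thr_pos m); lra. Qed.

Lemma four_pow p : 4 ^ p = (2 ^ p) ^ 2.
Proof. induction p; simpl; [ring|]. simpl in IHp. rewrite IHp; ring. Qed.

Lemma pow2_ge_INR p : INR p <= 2 ^ p.
Proof. induction p. simpl; lra. rewrite S_INR; simpl. assert (1 <= 2 ^ p) by (apply pow_R1_Rle; lra). lra. Qed.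

Lemma pow4_ge_INR p : INR p <= 4 ^ p.
Proof. rewrite four_pow. pose proof (pow2_ge_INR p). assert (1 <= 2 ^ p) by (apply pow_R1_Rle; lra). simpl; nra. Qed.

Fixpoint pc (y : nat -> R) (k : nat) : nat :=
  match k with
  | O => O
  | S k => if Rlt_dec (T (S k) y) (thr (S (pc y k))) then S (pc y k) else pc y k
  end.

Definition fw (y : nat -> R) (k : nat) : R :=
  if Rlt_dec (T (S k) y) (thr (S (pc y k))) then 2 else 1.

Definition Gs (y : nat -> R) : Prop := is_l2 y /\ forall m p, T m y <> thr p.

Lemma fw_12 y : weight12 (fw y).
Proof. intros i; unfold fw; destruct Rlt_dec; auto. Qed.

Lemma fw_pc2 y k : fw y k = 2 -> pc y (S k) = S (pc y k).
Proof. unfold fw; simpl; destruct Rlt_dec; auto; lra. Qed.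
Lemma fw_pc1 y k : fw y k = 1 -> pc y (S k) = pc y k.
Proof. unfold fw; simpl; destruct Rlt_dec; auto; lra. Qed.

Lemma pc_of_fw y y' : fw y = fw y' -> forall k, pc y k = pc y' k.
Proof. intros E k; induction k; auto. destruct (fw_12 y k) as [H|H].
 - rewrite (fw_pc1 y k H). assert (fw y' k = 1) by (rewrite <- E; auto). rewrite (fw_pc1 y' k H0); auto.
 - rewrite (fw_pc2 y k H). assert (fw y' k = 2) by (rewrite <- E; auto). rewrite (fw_pc2 y' k H0); auto. Qed.

Lemma pc_mono y k k' : (k <= k')%nat -> (pc y k <= pc y k')%nat.
Proof. intros L; induction L; auto. simpl; destruct Rlt_dec; lia. Qed.

Fixpoint Rw (w : nat -> R) (k : nat) : R :=
  match k with O => 1 | S k => Rw w k * w k end.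

Lemma Rw_ge1 w k : weight12 w -> 1 <= Rw w k.
Proof. intros Hw; induction k; simpl; [lra|]. destruct (Hw k) as [E|E]; rewrite E; lra. Qed.

Lemma Rw_mono w k k' : weight12 w -> (k <= k')%nat -> Rw w k <= Rw w k'.
Proof. intros Hw L; induction L; [lra|]. simpl. pose proof (Rw_ge1 w m Hw). destruct (Hw m) as [E|E]; rewrite E; lra. Qed.

Lemma iter_formula w x n i : weight12 w -> Nat.iter n (Bw w) x i = Rw w (i + n) / Rw w i * x (i + n)%nat.
Proof. intros Hw. revert i; induction n; intros i.
 - simpl. rewrite Nat.add_0_r. field. pose proof (Rw_ge1 w i Hw); lra.
 - simpl Nat.iter. unfold Bw at 1. rewrite IHn. replace (S i + n)%nat with (i + S n)%nat by lia.
   simpl Rw at 2. pose proof (Rw_ge1 w i Hw). assert (w i <> 0) by (destruct (Hw i) as [E|E]; rewrite E; lra).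
   field; split; auto; lra. Qed.

Lemma Rw_fw y k : Rw (fw y) k = 2 ^ (pc y k).
Proof. induction k; [reflexivity|]. change (Rw (fw y) (S k)) with (Rw (fw y) k * fw y k). rewrite IHk. destruct (fw_12 y k) as [H|H].
 - rewrite H, (fw_pc1 y k H). ring.
 - rewrite H, (fw_pc2 y k H). simpl; ring. Qed.

Lemma invariant y k : is_l2 y -> 4 ^ (pc y k) * T k y <= Rmax (T 0 y) 1.
Proof. intros Hy; induction k.
 - simpl. rewrite Rmult_1_l. apply Rmax_l.
 - simpl pc. destruct Rlt_dec as [L|L].
   + assert (4 ^ S (pc y k) * T (S k) y < 1).
     { apply Rlt_le_trans with (4 ^ S (pc y k) * thr (S (pc y k))).
       apply Rmult_lt_compat_l; auto. apply pow_lt; lra. unfold thr. rewrite Rinv_r. lra. apply pow_nonzero; lra. }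
     pose proof (Rmax_r (T 0 y) 1); lra.
   + pose proof (T_le_S k y Hy). assert (0 < 4 ^ pc y k) by (apply pow_lt; lra).
     apply Rle_trans with (4 ^ pc y k * T k y); auto. apply Rmult_le_compat_l; lra. Qed.

Lemma not_HC y : Gs y -> ~ HC (fw y) y.
Proof. intros [Hy _] [_ H]. set (M := Rmax (T 0 y) 1).
 set (z := fun i : nat => if Nat.eq_dec i 0 then M + 2 else 0).
 assert (Hz : is_l2 z). { destruct (series_finite_ex (fun i => (z i)^2) 1) as [E _]. intros i Hi; unfold z; destruct Nat.eq_dec; [lia|]; simpl; ring. exact E. }
 destruct (H z Hz 1 ltac:(lra)) as [k Hk].
 set (v := Nat.iter k (Bw (fw y)) y) in *.
 assert (Hv : is_l2 v) by (apply iter_l2; auto; apply fw_12).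
 pose proof (coord_le_dist v z 0 (l2_diff v z Hv Hz)) as C.
 assert (E: v 0%nat = 2 ^ pc y k * y k).
 { unfold v. rewrite iter_formula by apply fw_12. rewrite !Rw_fw. simpl. field. }
 unfold z in C; simpl in C. rewrite E in C.
 pose proof (invariant y k Hy). fold M in H0. pose proof (coord_le_T k y Hy).
 assert (0 < 4 ^ pc y k) by (apply pow_lt; lra).
 assert ((2 ^ pc y k * y k)^2 <= M).
 { replace ((2 ^ pc y k * y k)^2) with (4 ^ pc y k * (y k)^2) by (rewrite four_pow; ring).
   eapply Rle_trans; [|exact H0]. apply Rmult_le_compat_l; lra. }
 assert (1 <= M) by apply Rmax_r. set (q := 2 ^ pc y k * y k) in *.
 assert (Rabs q <= M + 1). { rewrite <- (Rabs_pos_eq (M+1)) by lra. apply Rsqr_le_abs_0. unfold Rsqr. nra. }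
 assert (Hq1 : Rabs (q - (M + 2)) < 1) by (eapply Rle_lt_trans; [exact C| exact Hk]). apply Rabs_def2 in Hq1.
 match goal with H: Rabs q <= M + 1 |- _ => apply Rabs_le_between in H end. lra. Qed.

Lemma pc_unbounded y : Gs y -> forall P, exists k, (P <= pc y k)%nat.
Proof. intros [Hy _].
 assert (Inc : forall k, exists k', (k <= k')%nat /\ pc y (S k') = S (pc y k')).
 { intros k. apply NNPP; intros Hn.
   assert (A: forall k', (k <= k')%nat -> pc y k' = pc y k).
   { intros k' L; induction L; auto. simpl. destruct Rlt_dec; auto. exfalso; apply Hn; exists m; split; auto. simpl. destruct Rlt_dec; tauto. }
   destruct (T_small y Hy (thr (S (pc y k))) (thr_pos _)) as [N HN].
   apply Hn. exists (N + k)%nat. split; [lia|]. simpl. destruct Rlt_dec as [L|L]; auto.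
   exfalso; apply L. rewrite (A (N+k)%nat) by lia. apply HN; lia. }
 intros P; induction P. exists O; lia. destruct IHP as [k Hk]. destruct (Inc k) as [k' [L E]].
 exists (S k'). rewrite E. pose proof (pc_mono y k k' L); lia. Qed.

Definition Un (n : nat) (y : nat -> R) : Prop :=
  is_l2 y /\ T (fst (Cantor.of_nat n)) y <> thr (snd (Cantor.of_nat n)).

Lemma dist_to_series y z e : is_l2 y -> is_l2 z -> 0 < e -> l2_dist y z < sqrt e -> Series (fun i => (y i - z i)^2) < e.
Proof. intros Hy Hz He H. unfold l2_dist in H. apply lt_of_sqrt_lt in H. rewrite pow2_sqrt in H; lra.
 apply series_nonneg; intros; apply pow2_ge_0. Qed.

Lemma Un_open n : l2_open (Un n).
Proof. intros y [Hy Hne]. split; auto. set (m := fst (of_nat n)) in *. set (p := snd (of_nat n)) in *.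
 set (d := Rabs (T m y - thr p)). assert (Hd: 0 < d) by (apply Rabs_pos_lt; intros E; apply Hne; lra).
 destruct (T_cont y Hy d Hd) as [e [He Hc]]. exists (sqrt e); split. apply sqrt_lt_R0; auto.
 intros z Hz Hdist. split; auto. fold m p. intros E. specialize (Hc z Hz (dist_to_series y z e Hy Hz He Hdist) m).
 rewrite E in Hc. unfold d in Hc. rewrite Rabs_minus_sym in Hc. lra. Qed.

Lemma Gs_Gdelta : l2_Gdelta Gs.
Proof. exists Un. split. apply Un_open. intros y; split.
 - intros [Hy H] n; split; auto.
 - intros H. split. apply (H O). intros m p. pose proof (H (to_nat (m, p))) as [_ K]. rewrite cancel_of_to in K. exact K. Qed.

Lemma fw_cont : cont_G_to_Cantor Gs fw.
Proof. intros y Gy n.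
 assert (S: exists eps, 0 < eps /\ forall z, Gs z -> l2_dist y z < eps -> pc z n = pc y n /\ forall i, (i < n)%nat -> fw z i = fw y i).
 { induction n.
   - exists 1; split; [lra|]. intros; split; auto; intros; lia.
   - destruct IHn as [e1 [He1 H1]]. destruct Gy as [Hy Hne].
     set (d := Rabs (T (S n) y - thr (S (pc y n)))). assert (Hd: 0 < d) by (apply Rabs_pos_lt; intros E; apply (Hne (S n) (S (pc y n))); lra).
     destruct (T_cont y Hy d Hd) as [e [He Hc]].
     exists (Rmin e1 (sqrt e)). split. apply Rmin_pos; auto; apply sqrt_lt_R0; auto.
     intros z Gz Hdist. destruct (H1 z Gz) as [Ep Ef]. eapply Rlt_le_trans; [exact Hdist| apply Rmin_l].
     assert (Hs: Series (fun i => (y i - z i)^2) < e). { apply dist_to_series; auto. apply Gz. eapply Rlt_le_trans; [exact Hdist| apply Rmin_r]. }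
     specialize (Hc z (proj1 Gz) Hs (S n)).
     assert (Same: fw z n = fw y n /\ pc z (S n) = pc y (S n)).
     { unfold fw; simpl. rewrite Ep. unfold d in Hc. apply Rabs_def2 in Hc. destruct Hc as [Hc1 Hc2].
       assert (T (S n) y <> thr (S (pc y n))) by apply Hne.
       destruct (Rlt_dec (T (S n) z) (thr (S (pc y n)))) as [A|A]; destruct (Rlt_dec (T (S n) y) (thr (S (pc y n)))) as [B|B]; auto; exfalso.
       - rewrite Rabs_pos_eq in Hc1, Hc2 by lra. lra.
       - rewrite Rabs_left in Hc1, Hc2 by lra. lra. }
     split. tauto. intros i Hi. destruct (Nat.eq_dec i n). subst; tauto. apply Ef; lia. }
 destruct S as [eps [He H]]. exists eps; split; auto. intros z Gz Hd i Hi. apply (H z Gz Hd); auto. Qed.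


Lemma avoid1 (g : nat -> R) N : forall a b, a < b -> exists a' b', a <= a' /\ a' < b' /\ b' <= b /\
  forall j, (j < N)%nat -> ~ (a' < g j < b').
Proof. induction N; intros a b Hab.
 - exists a, b; repeat split; try lra. intros; lia.
 - destruct (IHN a b Hab) as [a1 [b1 [H1 [H2 [H3 H4]]]]].
   destruct (classic (a1 < g N < b1)) as [In|Out].
   + exists a1, (g N). repeat split; try lra. intros j Hj. destruct (Nat.eq_dec j N). subst; lra.
     intros C; apply (H4 j ltac:(lia)); lra.
   + exists a1, b1. repeat split; try lra. intros j Hj. destruct (Nat.eq_dec j N). subst; auto. apply H4; lia. Qed.

Lemma avoid2 (F : nat -> nat -> R) K n : forall a b, a < b -> exists t, a < t < b /\
  forall m p, (m <= n)%nat -> (p < K)%nat -> t <> F m p.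
Proof.
 assert (G: forall n a b, a < b -> exists a' b', a <= a' /\ a' < b' /\ b' <= b /\
  forall m p, (m <= n)%nat -> (p < K)%nat -> ~ (a' < F m p < b')).
 { clear n. induction n; intros a b Hab.
   - destruct (avoid1 (F 0%nat) K a b Hab) as [a1 [b1 [H1 [H2 [H3 H4]]]]]. exists a1, b1; repeat split; auto.
     intros m p Hm Hp; replace m with 0%nat by lia; auto.
   - destruct (IHn a b Hab) as [a1 [b1 [H1 [H2 [H3 H4]]]]].
     destruct (avoid1 (F (S n)) K a1 b1 H2) as [a2 [b2 [G1 [G2 [G3 G4]]]]].
     exists a2, b2; repeat split; try lra. intros m p Hm Hp. destruct (Nat.eq_dec m (S n)). subst; auto.
     intros C. apply (H4 m p ltac:(lia) Hp). lra. }
 intros a b Hab. destruct (G n a b Hab) as [a1 [b1 [H1 [H2 [H3 H4]]]]].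
 exists ((a1 + b1) / 2). split. lra. intros m p Hm Hp E. apply (H4 m p Hm Hp). rewrite <- E; lra. Qed.

Definition upd (y : nat -> R) (n : nat) (t : R) : nat -> R :=
  fun i => if Nat.eq_dec i n then t else y i.

Lemma upd_zero y n t : (forall i, (n <= i)%nat -> y i = 0) -> forall i, (S n <= i)%nat -> upd y n t i = 0.
Proof. intros H i Hi; unfold upd; destruct Nat.eq_dec; [lia|]. apply H; lia. Qed.

Lemma finsupp_l2 v N : (forall i, (N <= i)%nat -> v i = 0) -> is_l2 v.
Proof. intros H. apply (series_finite_ex (fun i => (v i)^2) N). intros i Hi; rewrite H; auto; ring. Qed.

Lemma T_finsupp v N m : (forall i, (N <= i)%nat -> v i = 0) -> T m v = ps (fun i => (v (m + i)%nat)^2) (N - m).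
Proof. intros H. apply series_finite_ex. intros i Hi. rewrite H by lia; ring. Qed.

Lemma T_upd y n t m : (forall i, (n <= i)%nat -> y i = 0) ->
  (m <= n)%nat -> T m (upd y n t) = ps (fun i => (y (m + i)%nat)^2) (n - m) + t^2.
Proof. intros H Hm. rewrite (T_finsupp _ (S n)) by (apply upd_zero; auto).
 replace (S n - m)%nat with (S (n - m)) by lia. simpl ps. f_equal.
 - apply ps_ext. intros i Hi. unfold upd; destruct Nat.eq_dec; [lia|auto].
 - unfold upd; destruct Nat.eq_dec; [auto|lia]. Qed.

Lemma T_upd_big y n t m : (forall i, (n <= i)%nat -> y i = 0) -> (n < m)%nat -> T m (upd y n t) = 0.
Proof. intros H Hm. rewrite (T_finsupp _ (S n)) by (apply upd_zero; auto). replace (S n - m)%nat with O by lia. auto. Qed.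

Lemma exists_K a : 0 < a -> exists K, thr K <= a ^ 2.
Proof. intros Ha. destruct (pow_lt_1_zero (/4) ltac:(rewrite Rabs_pos_eq; lra) (a^2) ltac:(apply pow_lt; auto)) as [K HK].
 exists K. specialize (HK K ltac:(lia)). rewrite Rabs_pos_eq in HK by (apply pow_le; lra). unfold thr. rewrite <- pow_inv. lra. Qed.

Lemma pert y n a b : (forall i, (n <= i)%nat -> y i = 0) -> 0 < a < b -> exists t, a < t < b /\ Gs (upd y n t).
Proof. intros H Hab. destruct (exists_K a ltac:(lra)) as [K HK].
 set (c := fun m => ps (fun i => (y (m + i)%nat)^2) (n - m)).
 destruct (avoid2 (fun m p => sqrt (thr p - c m)) K n a b ltac:(lra)) as [t [Ht Hav]].
 exists t; split; auto. split. apply (finsupp_l2 _ (S n)); apply upd_zero; auto.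
 intros m p. destruct (Compare_dec.le_lt_dec m n) as [Hm|Hm].
 - rewrite T_upd by auto. fold (c m). intros E.
   assert (0 <= c m) by (apply ps_nonneg; intros; apply pow2_ge_0).
   destruct (Compare_dec.le_lt_dec K p) as [Hp|Hp].
   + pose proof (thr_anti K p Hp). assert (a ^ 2 < t ^ 2) by (simpl; nra). lra.
   + apply (Hav m p Hm Hp). rewrite <- E. replace (c m + t^2 - c m) with (t^2) by ring. rewrite sqrt_pow2; lra.
 - rewrite T_upd_big by auto. pose proof (thr_pos p); lra. Qed.

Definition trunc (x : nat -> R) (n : nat) : nat -> R := fun i => if Nat.ltb i n then x i else 0.

Lemma trunc_zero x n : forall i, (n <= i)%nat -> trunc x n i = 0.
Proof. intros i Hi; unfold trunc. destruct (Nat.ltb_spec i n); [lia|auto]. Qed.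

Lemma density x : is_l2 x -> forall eps, 0 < eps -> exists n v, Gs v /\ (forall i, (S n <= i)%nat -> v i = 0) /\
   Series (fun i => (x i - v i)^2) < eps.
Proof. intros Hx eps He. destruct (T_small x Hx (eps/4) ltac:(lra)) as [n Hn]. specialize (Hn n ltac:(lia)).
 set (b := Rmin 1 eps / 4). assert (Hb: 0 < b) by (unfold b; apply Rdiv_lt_0_compat; [apply Rmin_pos|]; lra).
 assert (Hb2: b^2 <= eps / 16). { unfold b. pose proof (Rmin_l 1 eps). pose proof (Rmin_r 1 eps). pose proof (Rmin_pos 1 eps ltac:(lra) He).
   set (q := Rmin 1 eps) in *. replace ((q/4)^2) with (q * q / 16) by (simpl; field). assert (q * q <= eps) by nra. lra. }
 destruct (pert (trunc x n) n (b/2) b (trunc_zero x n) ltac:(lra)) as [t [Ht Gv]].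
 exists n, (upd (trunc x n) n t). split; auto. split. apply upd_zero, trunc_zero.
 set (v := upd (trunc x n) n t).
 set (h1 := fun i => if Nat.leb n i then (x i)^2 else 0).
 set (h2 := fun i => if Nat.eq_dec i n then t^2 else 0).
 assert (E1 : ex_series h1 /\ Series h1 = T n x).
 { split. apply ex_series_le_R with (fun i => (x i)^2); auto. intros i; unfold h1; destruct (Nat.leb_spec n i); split; try apply pow2_ge_0; lra.
   unfold T. rewrite (Series_incr_n_aux h1 n). apply Series_ext. intros k; unfold h1. destruct (Nat.leb_spec n (n+k)); [auto|lia].
   intros k Hk; unfold h1; destruct (Nat.leb_spec n k); [lia|auto]. }
 assert (E2 : ex_series h2 /\ Series h2 = t^2).
 { destruct (series_finite_ex h2 (S n)) as [A B]. intros i Hi; unfold h2; destruct Nat.eq_dec; [lia|auto].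
   split; auto. rewrite B. simpl. rewrite ps_zero. unfold h2; destruct Nat.eq_dec; [ring|lia]. intros i Hi; unfold h2; destruct Nat.eq_dec; [lia|auto]. }
 assert (Le: Series (fun i => (x i - v i)^2) <= Series (fun i => 2 * h1 i + 2 * h2 i)).
 { apply Series_le. 2: apply ex_series_lin; tauto. intros i. split. apply pow2_ge_0.
   unfold v, upd, trunc, h1, h2. destruct (Nat.eq_dec i n).
   - subst. destruct (Nat.leb_spec n n); [|lia]. replace (x n - t) with (x n + - t) by ring. eapply Rle_trans. apply sq_le2. right; ring.
   - destruct (Nat.ltb_spec i n); destruct (Nat.leb_spec n i); try lia.
     + replace (x i - x i) with 0 by ring. simpl; lra.
     + replace (x i - 0) with (x i) by ring. pose proof (pow2_ge_0 (x i)); lra. }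
 rewrite Series_plus, !Series_scal_l in Le. 2,3: apply ex_series_scalR; tauto.
 destruct E1 as [_ E1]; destruct E2 as [_ E2]. rewrite E1, E2 in Le.
 assert (t^2 <= b^2) by (apply pow_incr; lra). lra. Qed.

Lemma part3 U : l2_open U -> (exists u, U u) ->
  exists y1 y2, U y1 /\ Gs y1 /\ U y2 /\ Gs y2 /\ fw y1 <> fw y2.
Proof. intros HU [u Hu]. destruct (HU u Hu) as [Hul [r [Hr Hball]]].
 destruct (density u Hul (r^2/8) ltac:(assert (0 < r^2) by (apply pow_lt; lra); lra)) as [n [v [Gv [Hvz Hs1]]]].
 set (C0 := 2 * T 0 u + 2 * r^2). set (M := Rmax C0 1). set (a := r / 8).
 assert (Ha: 0 < a) by (unfold a; lra). assert (Ha2 : 0 < a^2) by (apply pow_lt; lra).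
 destruct (INR_unbounded (M / a^2)) as [P HP].
 destruct (pc_unbounded v Gv P) as [k Hk]. set (N := Nat.max k (S n)).
 assert (HPN: (P <= pc v N)%nat) by (pose proof (pc_mono v k N ltac:(lia)); lia).
 assert (HvN: forall i, (N <= i)%nat -> v i = 0) by (intros; apply Hvz; lia).
 destruct (pert v N a (r/4) HvN ltac:(unfold a; lra)) as [s [Hs Gy2]].
 set (y2 := upd v N s) in *.
 destruct Gv as [Hvl Hv']. destruct Gy2 as [Hy2l Hy2'].
 assert (D2: Series (fun i => (v i - y2 i)^2) = s^2).
 { destruct (series_finite_ex (fun i => (v i - y2 i)^2) (S N)) as [_ B].
   intros i Hi; unfold y2, upd; destruct Nat.eq_dec; [lia|]. ring.
   rewrite B. simpl. rewrite ps_zero. unfold y2, upd. destruct Nat.eq_dec; [|lia]. rewrite HvN by lia. ring.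
   intros i Hi; unfold y2, upd; destruct Nat.eq_dec; [lia|]. ring. }
 destruct (tri2 u v y2 (l2_diff u v Hul Hvl) (l2_diff v y2 Hvl Hy2l)) as [_ D3].
 rewrite D2 in D3.
 assert (Hs2: s^2 <= (r/4)^2) by (apply pow_incr; lra).
 assert (Hr2: 0 < r^2) by (apply pow_lt; lra).
 assert (D3': Series (fun i => (u i - y2 i)^2) < r^2) by (replace ((r/4)^2) with (r^2/16) in Hs2 by (simpl; field); lra).
 exists v, y2. split; [|split; [split; auto|split; [|split; [split; auto|]]]].
 - apply Hball; auto. apply sqrt_lt_of; [apply series_nonneg; intros; apply pow2_ge_0 | lra | lra].
 - apply Hball; auto. apply sqrt_lt_of; [apply series_nonneg; intros; apply pow2_ge_0 | lra | lra].
 - intros E. pose proof (pc_of_fw v y2 E N) as Epc.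
   pose proof (invariant y2 N Hy2l) as Inv.
   assert (TN: T N y2 = s^2). { unfold y2. rewrite T_upd by (auto; lia). rewrite Nat.sub_diag. simpl; ring. }
   assert (Hu0: is_l2 (fun _ : nat => 0)) by (apply (finsupp_l2 _ 0); auto).
   destruct (tri2 y2 u (fun _ => 0) (l2_diff y2 u Hy2l Hul) (l2_diff u _ Hul Hu0)) as [_ D4].
   assert (T0: T 0 y2 <= C0).
   { unfold C0. replace (T 0 y2) with (Series (fun i => (y2 i - 0)^2)).
     replace (Series (fun i => (y2 i - u i)^2)) with (Series (fun i => (u i - y2 i)^2)) in D4.
     replace (Series (fun i => (u i - 0)^2)) with (T 0 u) in D4. lra.
     unfold T; apply Series_ext; intros; simpl; f_equal; ring.
     apply Series_ext; intros; ring.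
     unfold T; apply Series_ext; intros; simpl; f_equal; ring. }
   assert (HM: Rmax (T 0 y2) 1 <= M) by (unfold M; apply Rle_max_compat_r; auto).
   rewrite TN, <- Epc in Inv.
   assert (INR P <= 4 ^ pc v N). { eapply Rle_trans; [apply le_INR; exact HPN| apply pow4_ge_INR]. }
   assert (a^2 <= s^2) by (apply pow_incr; lra).
   assert (M < INR P * a^2). { apply Rmult_lt_reg_r with (/ a^2). apply Rinv_0_lt_compat; auto.
     rewrite Rmult_assoc, Rinv_r by lra. rewrite Rmult_1_r. exact HP. }
   assert (INR P * a^2 <= 4 ^ pc v N * s^2). { apply Rmult_le_compat; auto. apply pos_INR. lra. }
   lra. Qed.


Definition entry (e : nat) : R := INR (fst (of_nat e)) - INR (snd (of_nat e)).
Fixpoint comp (c i : nat) : nat := match i with O => fst (of_nat c) | S i => comp (snd (of_nat c)) i end.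
Definition Dn (a : nat) : nat := fst (of_nat a).
Definition Dv (a : nat) (i : nat) : R := if Nat.ltb i (Dn a) then entry (comp (snd (of_nat a)) i) / 2 ^ (Dn a) else 0.

Lemma comp_surj N : forall g : nat -> nat, exists c, forall i, (i < N)%nat -> comp c i = g i.
Proof. induction N; intros g. exists O; intros; lia.
 destruct (IHN (fun i => g (S i))) as [c' Hc']. exists (to_nat (g O, c')).
 intros i Hi. destruct i; cbn [comp]; rewrite cancel_of_to; cbn [fst snd]; auto. apply Hc'; lia. Qed.

Lemma entry_IZR z : entry (to_nat (Z.to_nat z, Z.to_nat (- z))) = IZR z.
Proof. unfold entry. rewrite cancel_of_to. simpl. rewrite !INR_IZR_INZ, <- minus_IZR. f_equal. lia. Qed.

Lemma approx r : exists e, Rabs (entry e - r) <= 1.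
Proof. exists (to_nat (Z.to_nat (up r), Z.to_nat (- up r))). rewrite entry_IZR.
 destruct (archimed r). rewrite Rabs_pos_eq; lra. Qed.

Lemma ps_const c M : ps (fun _ => c) M = INR M * c.
Proof. induction M; simpl ps. simpl; ring. rewrite IHM, S_INR; ring. Qed.

Lemma tail_fun x n : is_l2 x -> ex_series (fun i => if Nat.leb n i then (x i)^2 else 0) /\
   Series (fun i => if Nat.leb n i then (x i)^2 else 0) = T n x.
Proof. intros Hx. split. apply ex_series_le_R with (fun i => (x i)^2); auto. intros i; destruct (Nat.leb_spec n i); split; try apply pow2_ge_0; lra.
 unfold T. rewrite (Series_incr_n_aux _ n). apply Series_ext. intros k. destruct (Nat.leb_spec n (n+k)); [auto|lia].
 intros k Hk; destruct (Nat.leb_spec n k); [lia|auto]. Qed.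

Lemma Dv_zero a i : (Dn a <= i)%nat -> Dv a i = 0.
Proof. intros H; unfold Dv. destruct (Nat.ltb_spec i (Dn a)); [lia|auto]. Qed.

Lemma Dv_dense z : is_l2 z -> forall eps, 0 < eps -> exists a, ex_series (fun i => (Dv a i - z i)^2) /\ Series (fun i => (Dv a i - z i)^2) < eps.
Proof. intros Hz eps He. destruct (T_small z Hz (eps/2) ltac:(lra)) as [N1 H1].
 destruct (pow_lt_1_zero (1/2) ltac:(rewrite Rabs_pos_eq; lra) (eps/2) ltac:(lra)) as [N2 H2].
 set (N := Nat.max N1 N2). specialize (H1 N ltac:(lia)). specialize (H2 N ltac:(lia)). rewrite Rabs_pos_eq in H2 by (apply pow_le; lra).
 assert (P2: 0 < 2 ^ N) by (apply pow_lt; lra).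
 set (e := fun i => to_nat (Z.to_nat (up (z i * 2 ^ N)), Z.to_nat (- up (z i * 2 ^ N)))).
 destruct (comp_surj N e) as [c Hc]. exists (to_nat (N, c)).
 assert (HD: forall i, (i < N)%nat -> Rabs (Dv (to_nat (N, c)) i - z i) <= / 2 ^ N).
 { intros i Hi. unfold Dv, Dn. rewrite cancel_of_to; simpl. destruct (Nat.ltb_spec i N); [|lia].
   rewrite Hc by auto. unfold e. rewrite entry_IZR. destruct (archimed (z i * 2 ^ N)) as [A B].
   replace (IZR (up (z i * 2 ^ N)) / 2 ^ N - z i) with ((IZR (up (z i * 2 ^ N)) - z i * 2 ^ N) * / 2 ^ N) by (field; lra).
   rewrite Rabs_mult, Rabs_pos_eq by lra. rewrite (Rabs_pos_eq (/ 2 ^ N)) by (left; apply Rinv_0_lt_compat; auto).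
   rewrite <- (Rmult_1_l (/ 2 ^ N)) at 2. apply Rmult_le_compat_r; [left; apply Rinv_0_lt_compat; auto | lra]. }
 set (h1 := fun i : nat => if Nat.ltb i N then / 4 ^ N else 0).
 set (h2 := fun i => if Nat.leb N i then (z i)^2 else 0).
 destruct (series_finite_ex h1 N) as [E1 S1]. intros i Hi; unfold h1; destruct (Nat.ltb_spec i N); [lia|auto].
 destruct (tail_fun z N Hz) as [E2 S2]. fold h2 in E2, S2.
 assert (Le: forall i, 0 <= (Dv (to_nat (N, c)) i - z i)^2 <= h1 i + h2 i).
 { intros i; split; [apply pow2_ge_0|]. unfold h1, h2. destruct (Nat.ltb_spec i N); destruct (Nat.leb_spec N i); try lia.
   - specialize (HD i H). rewrite Rplus_0_r. rewrite <- (pow2_abs (Dv _ i - z i)).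
     replace (/ 4 ^ N) with ((/ 2 ^ N)^2) by (rewrite four_pow, pow_inv; auto). apply pow_incr; split; auto; apply Rabs_pos.
   - rewrite Dv_zero by (unfold Dn; rewrite cancel_of_to; simpl; lia). right; ring. }
 assert (Es: ex_series (fun i => h1 i + h2 i)) by (pose proof (ex_series_lin h1 h2 1 1 E1 E2) as K; eapply ex_series_ext; [|exact K]; intros; simpl; ring).
 split. apply ex_series_le_R with (1 := Le); auto.
 eapply Rle_lt_trans. apply Series_le; [exact Le| exact Es]. rewrite Series_plus by auto. rewrite S1, S2.
 rewrite (ps_ext h1 (fun _ => / 4 ^ N)) by (intros i Hi; unfold h1; destruct (Nat.ltb_spec i N); [auto|lia]).
 rewrite ps_const. assert (INR N * / 4 ^ N <= (1/2) ^ N).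
 { rewrite four_pow. pose proof (pow2_ge_INR N). replace ((1/2)^N) with (2 ^ N * / ((2^N)^2)).
   apply Rmult_le_compat_r; auto. left; apply Rinv_0_lt_compat, pow_lt; auto.
   replace (1/2) with (/2) by field. rewrite pow_inv. field. apply pow_nonzero; lra. }
 lra. Qed.


Lemma block_sum (h : nat -> R) (a L : nat -> nat) (c : R) : 0 <= c ->
  (forall i, 0 <= h i) -> (forall j, (a j + L j <= a (S j))%nat) -> (forall j, (j <= a j)%nat) ->
  (forall i, (i < a 0%nat)%nat -> h i = 0) ->
  (forall j i, (a j + L j <= i)%nat -> (i < a (S j))%nat -> h i = 0) ->
  (forall j, ps (fun l => h (a j + l)%nat) (L j) <= c * (1/4) ^ j) ->
  ex_series h /\ Series h <= c * (4/3).
Proof. intros Hc H0 Ha Hj Hb Hg Hs.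
 assert (C: forall j, ps h (a j) <= c * ps (fun j => (1/4)^j) j).
 { induction j. simpl. rewrite ps_zero by auto. lra.
   replace (a (S j)) with (a j + L j + (a (S j) - a j - L j))%nat by (specialize (Ha j); lia).
   rewrite !ps_split. rewrite (ps_zero (fun i => h (a j + L j + i)%nat)).
   simpl ps. specialize (Hs j). lra. intros i Hi. apply (Hg j); lia. }
 apply series_bounded; auto. intros M.
 eapply Rle_trans. apply (ps_mono h M (a M)); auto. eapply Rle_trans. apply C.
 apply Rmult_le_compat_l; auto. eapply Rle_trans. apply ps_geom. lra. right; field. Qed.

Fixpoint bpos (g Nl : nat -> nat) (k : nat) : nat :=
  match k with O => g O | S k => (bpos g Nl k + Nl k + g (S k))%nat end.

Lemma bpos_ge g Nl k : (g k <= bpos g Nl k)%nat.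
Proof. destruct k; simpl; lia. Qed.

Lemma bpos_step g Nl j k : (j < k)%nat -> (bpos g Nl j + Nl j + g k <= bpos g Nl k)%nat.
Proof. induction k; intros H; [lia|]. simpl. destruct (Nat.eq_dec j k). subst; lia.
 specialize (IHk ltac:(lia)). lia. Qed.

Lemma bpos_mono g Nl j k : (j <= k)%nat -> (bpos g Nl j <= bpos g Nl k)%nat.
Proof. intros H. destruct (Nat.eq_dec j k). subst; lia. pose proof (bpos_step g Nl j k ltac:(lia)); lia. Qed.

Definition inblk g Nl k i : Prop := (bpos g Nl k <= i < bpos g Nl k + Nl k)%nat.

Lemma blk_unique g Nl j k i : inblk g Nl j i -> inblk g Nl k i -> j = k.
Proof. unfold inblk; intros A B. destruct (Nat.lt_total j k) as [L|[E|L]]; auto.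
 pose proof (bpos_step g Nl j k L); lia. pose proof (bpos_step g Nl k j L); lia. Qed.

Lemma gap_none g Nl j i : (bpos g Nl j + Nl j <= i)%nat -> (i < bpos g Nl (S j))%nat -> forall k, ~ inblk g Nl k i.
Proof. unfold inblk; intros A B k C. destruct (Nat.lt_total k j) as [L|[E|L]].
 - pose proof (bpos_step g Nl k j L); lia.
 - subst; lia.
 - pose proof (bpos_mono g Nl (S j) k L); lia. Qed.

Lemma before_none g Nl i : (i < bpos g Nl 0)%nat -> forall k, ~ inblk g Nl k i.
Proof. unfold inblk; intros A k C. pose proof (bpos_mono g Nl 0 k ltac:(lia)); lia. Qed.

Definition Xb (w : nat -> R) g Nl (d : nat -> nat -> R) k i : R :=
  if (Nat.leb (bpos g Nl k) i && Nat.ltb i (bpos g Nl k + Nl k))%bool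
  then d k (i - bpos g Nl k)%nat * Rw w (i - bpos g Nl k)%nat / Rw w i else 0.

Definition xh w g Nl d (i : nat) : R := ps (fun k => Xb w g Nl d k i) (S i).

Lemma Xb_in w g Nl d k i : inblk g Nl k i -> Xb w g Nl d k i = d k (i - bpos g Nl k)%nat * Rw w (i - bpos g Nl k)%nat / Rw w i.
Proof. unfold inblk, Xb; intros [A B]. destruct (Nat.leb_spec (bpos g Nl k) i); [|lia]. destruct (Nat.ltb_spec i (bpos g Nl k + Nl k)); [|lia]. auto. Qed.

Lemma Xb_out w g Nl d k i : ~ inblk g Nl k i -> Xb w g Nl d k i = 0.
Proof. unfold inblk, Xb; intros A. destruct (Nat.leb_spec (bpos g Nl k) i); destruct (Nat.ltb_spec i (bpos g Nl k + Nl k)); auto; lia. Qed.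

Lemma xh_in w g Nl d k i : (forall k, (S k <= g k)%nat) -> inblk g Nl k i ->
  xh w g Nl d i = d k (i - bpos g Nl k)%nat * Rw w (i - bpos g Nl k)%nat / Rw w i.
Proof. intros Hg H. unfold xh. rewrite (ps_single _ _ k). apply Xb_in; auto.
 pose proof (Hg k); pose proof (bpos_ge g Nl k); unfold inblk in H; lia.
 intros j _ Hj. apply Xb_out. intros C. apply Hj. eapply blk_unique; eauto. Qed.

Lemma xh_out w g Nl d i : (forall k, ~ inblk g Nl k i) -> xh w g Nl d i = 0.
Proof. intros H. unfold xh. apply ps_zero. intros; apply Xb_out; auto. Qed.

Lemma blk_bound w (Hw : weight12 w) (d : nat -> nat -> R) Nl g j m :
  4 ^ j * (ps (fun l => (d j l * Rw w l)^2) (Nl j) + 1) <= Rw w (g j) ^ 2 -> (g j <= m)%nat ->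
  ps (fun l => (d j l * Rw w l / Rw w (m + l)%nat)^2) (Nl j) <= (1/4) ^ j.
Proof. intros Hg Hm. set (E := ps (fun l => (d j l * Rw w l)^2) (Nl j)). set (Q := Rw w (g j)).
 assert (HQ: 1 <= Q) by apply Rw_ge1, Hw.
 assert (E0: 0 <= E) by (apply ps_nonneg; intros; apply pow2_ge_0).
 apply Rle_trans with (ps (fun l => / Q ^ 2 * (d j l * Rw w l)^2) (Nl j)).
 - apply ps_le. intros l _. set (p := d j l * Rw w l). set (q := Rw w (m + l)%nat).
   assert (Hq: Q <= q) by (apply Rw_mono; auto; lia).
   replace ((p / q)^2) with (p^2 / q^2) by (field; lra).
   assert (Q^2 <= q^2) by (apply pow_incr; lra). assert (0 < Q^2) by (apply pow_lt; lra).
   unfold Rdiv. rewrite Rmult_comm. apply Rmult_le_compat_r. apply pow2_ge_0. apply Rinv_le_contravar; lra.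
 - rewrite ps_scal. fold E. assert (0 < 4 ^ j) by (apply pow_lt; lra).
   assert (0 < Q^2) by (apply pow_lt; lra).
   replace ((1/4)^j) with (/ 4 ^ j) by (rewrite <- pow_inv; f_equal; field).
   apply Rmult_le_reg_l with (Q^2 * 4 ^ j). apply Rmult_lt_0_compat; lra.
   replace (Q ^ 2 * 4 ^ j * (/ Q ^ 2 * E)) with (4 ^ j * E) by (field; repeat split; first [lra | apply pow_nonzero; lra]).
   replace (Q ^ 2 * 4 ^ j * / 4 ^ j) with (Q^2) by (field; repeat split; first [lra | apply pow_nonzero; lra]). fold Q in Hg. rewrite Rmult_plus_distr_l in Hg. unfold E. lra. Qed.


Lemma hc_construct w (Hw : weight12 w) (d : nat -> nat -> R) (Nl g : nat -> nat) :
  (forall k i, (Nl k <= i)%nat -> d k i = 0) -> (forall k, (S k <= g k)%nat) ->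
  (forall k, 4 ^ k * (ps (fun l => (d k l * Rw w l)^2) (Nl k) + 1) <= Rw w (g k) ^ 2) ->
  is_l2 (xh w g Nl d) /\ forall k,
    ex_series (fun i => (Nat.iter (bpos g Nl k) (Bw w) (xh w g Nl d) i - d k i)^2) /\
    Series (fun i => (Nat.iter (bpos g Nl k) (Bw w) (xh w g Nl d) i - d k i)^2) <= (1/4) ^ k.
Proof. intros Hd Hg Hb. set (x := xh w g Nl d).
 assert (Rpos: forall i, 0 < Rw w i) by (intros i; pose proof (Rw_ge1 w i Hw); lra).
 split.
 - destruct (block_sum (fun i => (x i)^2) (bpos g Nl) Nl 1) as [A _]; auto; try lra.
   + intros; apply pow2_ge_0.
   + intros j; pose proof (bpos_step g Nl j (S j) ltac:(lia)); lia.
   + intros j; pose proof (Hg j); pose proof (bpos_ge g Nl j); lia.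
   + intros i Hi. unfold x; rewrite xh_out. simpl; ring. apply before_none; auto.
   + intros j i A B. unfold x; rewrite xh_out. simpl; ring. eapply gap_none; eauto.
   + intros j. rewrite Rmult_1_l.
     rewrite (ps_ext _ (fun l => (d j l * Rw w l / Rw w (bpos g Nl j + l)%nat)^2)).
     apply (blk_bound w Hw d Nl g); auto. apply bpos_ge.
     intros l Hl. unfold x. rewrite (xh_in w g Nl d j); auto. f_equal. replace (bpos g Nl j + l - bpos g Nl j)%nat with l by lia. auto.
     unfold inblk; lia.
 - intros k. set (P := bpos g Nl k).
   assert (Fk: forall j, (P + Nl k + g (S k + j) <= bpos g Nl (S k + j))%nat) by (intros j; apply bpos_step; lia).
   set (h := fun i => (Rw w (i + P)%nat / Rw w i * x (i + P)%nat - d k i)^2).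
   assert (Eh: forall i, (Nat.iter P (Bw w) x i - d k i)^2 = h i) by (intros i; unfold h; rewrite iter_formula; auto).
   destruct (block_sum h (fun j => bpos g Nl (S k + j) - P)%nat (fun j => Nl (S k + j)%nat) ((1/4)^(S k))) as [A B].
   + apply pow_le; lra.
   + intros; apply pow2_ge_0.
   + intros j. pose proof (bpos_step g Nl (S k + j) (S k + S j)%nat ltac:(lia)). pose proof (Fk j). lia.
   + intros j. pose proof (Fk j). pose proof (Hg (S k + j)%nat). lia.
   + intros i Hi. rewrite Nat.add_0_r in Hi. unfold h. destruct (Nat.lt_ge_cases i (Nl k)) as [L|L].
     * unfold x. rewrite (xh_in w g Nl d k) by (auto; unfold inblk; lia). rewrite Nat.add_sub.
       fold P. replace (Rw w (i + P)%nat / Rw w i * (d k i * Rw w i / Rw w (i + P)%nat) - d k i) with 0.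
       simpl; ring. field. split; apply Rgt_not_eq, Rpos.
     * rewrite Hd by auto. unfold x. rewrite xh_out. simpl; ring. apply (gap_none g Nl k); fold P; lia.
   + intros j i A1 A2. unfold h. pose proof (Fk j). rewrite Hd by lia. unfold x. rewrite xh_out. simpl; ring.
     apply (gap_none g Nl (S k + j)%nat). lia. rewrite Nat.add_succ_r in A2. lia.
   + intros j. rewrite <- pow_add.
     rewrite (ps_ext _ (fun l => (d (S k + j)%nat l * Rw w l / Rw w ((bpos g Nl (S k + j) - P) + l)%nat)^2)).
     apply (blk_bound w Hw d Nl g); auto. pose proof (Fk j); lia.
     intros l Hl. pose proof (Fk j). unfold h. rewrite (Hd k) by lia. unfold x.
     rewrite (xh_in w g Nl d (S k + j)%nat) by (auto; unfold inblk; lia).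
     replace (bpos g Nl (S k + j) - P + l + P - bpos g Nl (S k + j))%nat with l by lia.
     replace (bpos g Nl (S k + j) - P + l + P)%nat with (bpos g Nl (S k + j) + l)%nat by lia.
     f_equal. field. split; apply Rgt_not_eq, Rpos.
   + split. eapply ex_series_ext; [|exact A]. intros; symmetry; apply Eh.
     rewrite (Series_ext _ h) by apply Eh. eapply Rle_trans; [exact B|].
     simpl. assert (0 <= (1/4)^k) by (apply pow_le; lra). lra. Qed.

Lemma HC_exists w : weight12 w -> (forall M, exists k, M <= Rw w k) -> exists x, HC w x.
Proof. intros Hw Hu.
 set (d := fun k => Dv (fst (of_nat k))). set (Nl := fun k => Dn (fst (of_nat k))).
 assert (Hg: forall k, {g : nat | (S k <= g)%nat /\ 4 ^ k * (ps (fun l => (d k l * Rw w l)^2) (Nl k) + 1) <= Rw w g ^ 2}).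
 { intros k. apply constructive_indefinite_description.
   set (M := 4 ^ k * (ps (fun l => (d k l * Rw w l)^2) (Nl k) + 1)).
   destruct (Hu M) as [g0 H0]. exists (Nat.max g0 (S k)). split. lia.
   pose proof (Rw_mono w g0 (Nat.max g0 (S k)) Hw ltac:(lia)). pose proof (Rw_ge1 w (Nat.max g0 (S k)) Hw).
   simpl. nra. }
 set (g := fun k => proj1_sig (Hg k)).
 destruct (hc_construct w Hw d Nl g) as [Hx Hk].
 - intros k i Hi. apply Dv_zero; auto.
 - intros k; unfold g; destruct (Hg k); simpl; tauto.
 - intros k; unfold g; destruct (Hg k); simpl; tauto.
 - exists (xh w g Nl d). split; auto. intros z Hz eps He.
   assert (He2: 0 < eps^2/4) by (assert (0 < eps^2) by (apply pow_lt; lra); lra).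
   destruct (Dv_dense z Hz (eps^2/4) He2) as [a [Ea Sa]].
   destruct (pow_lt_1_zero (1/4) ltac:(rewrite Rabs_pos_eq; lra) (eps^2/4) He2) as [b0 Hb0].
   set (k := to_nat (a, b0)). assert (Hkb: (b0 <= k)%nat) by (unfold k; pose proof (to_nat_non_decreasing a b0); lia).
   specialize (Hb0 k Hkb). rewrite Rabs_pos_eq in Hb0 by (apply pow_le; lra).
   assert (Edk: d k = Dv a) by (unfold d, k; rewrite cancel_of_to; auto).
   destruct (Hk k) as [E1 S1]. rewrite Edk in E1, S1.
   exists (bpos g Nl k).
   destruct (tri2 _ (Dv a) z E1 Ea) as [E3 S3].
   unfold l2_dist. apply sqrt_lt_of; auto. apply series_nonneg; intros; apply pow2_ge_0. lra. Qed.


Theorem lemma5 :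
  exists (G : (nat -> R) -> Prop) (f : (nat -> R) -> nat -> R),
    l2_dense G /\ l2_Gdelta G /\
    (forall y, G y -> weight12 (f y)) /\
    cont_G_to_Cantor G f /\
    (forall y, G y -> ~ HC (f y) y) /\
    (forall y, G y -> exists x, HC (f y) x) /\
    (forall U, l2_open U -> (exists u, U u) ->
       exists y1 y2, U y1 /\ G y1 /\ U y2 /\ G y2 /\ f y1 <> f y2).
Proof.
 exists Gs, fw. split; [|split; [|split; [|split; [|split; [|split]]]]].
 - split. intros x [H _]; auto. intros x Hx eps He.
   assert (0 < eps^2) by (apply pow_lt; lra).
   destruct (density x Hx (eps^2) H) as [n [v [Gv [_ Hs]]]]. exists v; split; auto.
   unfold l2_dist; apply sqrt_lt_of; auto. apply series_nonneg; intros; apply pow2_ge_0.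
 - apply Gs_Gdelta.
 - intros; apply fw_12.
 - apply fw_cont.
 - apply not_HC.
 - intros y Gy. apply HC_exists. apply fw_12. intros M. destruct (INR_unbounded M) as [P HP].
   destruct (pc_unbounded y Gy P) as [k Hk]. exists k. rewrite Rw_fw.
   pose proof (pow2_ge_INR (pc y k)). pose proof (le_INR _ _ Hk). lra.
 - apply part3.
Qed.
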